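(* Let $X$ be a real or complex $m\times n$ matrix and $\tilde X=J_m^*XJ_n$ (an $(m+1)\times(n+1)$ matrix all of whose row and column sums are zero). Let $k_m,k_n$ be invertible square matrices with $K_m=k_mk_m^*$ and $K_n=k_nk_n^*$. Then \[\tilde X^+=J_n^*(k_n^{-1})^*(k_m^*Xk_n)^+k_m^{-1}J_m.\]
   Context: $A^*$ denotes conjugate transpose and $A^+$ the Moore–Penrose inverse (the unique $B$ with $ABA=A$, $BAB=B$, $(AB)^*=AB$, $(BA)^*=BA$). For each $p\ge1$, $\mathbf 1$ is the all-ones column vector, $J_p:=[I_p\mid -\mathbf 1]$ is the $p\times(p+1)$ matrix obtained by appending a column of $-1$'s to $I_p$, and $K_p:=J_pJ_p^*=I_p+\mathbf 1\mathbf 1^*$ (symmetric positive definite). *)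

(* Defs.v *)
(* Scalars: any numClosedFieldType C (e.g. algC), with
   conjugation Num.conj; this covers the complex case, and real matrices are
   matrices over C with real entries. *)
From HB Require Import structures.
From mathcomp Require Import all_boot all_order all_algebra.
From Stdlib Require Import ClassicalEpsilon.
Set Implicit Arguments. Unset Strict Implicit. Unset Printing Implicit Defensive.
Import Order.TTheory GRing.Theory Num.Theory.
Local Open Scope ring_scope.

Definition ctmx (C : numClosedFieldType) (m n : nat) (A : 'M[C]_(m, n)) : 'M[C]_(n, m) :=
  (map_mx Num.conj A)^T.

Definition is_MP (C : numClosedFieldType) (m n : nat)
  (A : 'M[C]_(m, n)) (B : 'M[C]_(n, m)) : Prop :=
  [/\ A *m B *m A = A, B *m A *m B = B,
      ctmx (A *m B) = A *m B & ctmx (B *m A) = B *m A].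

(* the Moore--Penrose inverse A^+ (the unique B with is_MP A B; it exists) *)
Definition mpinv (C : numClosedFieldType) (m n : nat) (A : 'M[C]_(m, n)) : 'M[C]_(n, m) :=
  epsilon (inhabits 0) (fun B => is_MP A B).

Definition Jmx (C : numClosedFieldType) (p : nat) : 'M[C]_(p, p.+1) :=
  \matrix_(i < p, j < p.+1) (if (j : nat) == p then -1 else ((i : nat) == j)%:R).

Definition Kmx (C : numClosedFieldType) (p : nat) : 'M[C]_p := Jmx C p *m ctmx (Jmx C p).

(* Main.v *)
Require Import Defs.
From HB Require Import structures.
From mathcomp Require Import all_boot all_order all_algebra.
From Stdlib Require Import ClassicalEpsilon.
Import Order.TTheory GRing.Theory Num.Theory.
Local Open Scope ring_scope.
Set Implicit Arguments. Unset Strict Implicit.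

Section Aux.
Variable C : numClosedFieldType.

Lemma ctmx_mul m n p (A : 'M[C]_(m, n)) (B : 'M[C]_(n, p)) :
  ctmx (A *m B) = ctmx B *m ctmx A.
Proof. by rewrite /ctmx map_mxM trmx_mul. Qed.

Lemma ctmxK m n (A : 'M[C]_(m, n)) : ctmx (ctmx A) = A.
Proof. by apply/matrixP => i j; rewrite !mxE conjCK. Qed.

Lemma ctmx1 n : ctmx (1%:M : 'M[C]_n) = 1%:M.
Proof. by apply/matrixP => i j; rewrite !mxE rmorph_nat eq_sym. Qed.

Lemma MP_uniq m n (A : 'M[C]_(m, n)) B B' : is_MP A B -> is_MP A B' -> B = B'.
Proof.
case=> hB1 hB2 hB3 hB4 [hC1 hC2 hC3 hC4].
have AB : A *m B = A *m B'.
  transitivity (ctmx (A *m B)); first by rewrite hB3.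
  by rewrite -{1}hC1 -(mulmxA (A *m B')) ctmx_mul hB3 hC3 mulmxA hB1.
have BA : B *m A = B' *m A.
  transitivity (ctmx (B *m A)); first by rewrite hB4.
  rewrite -{1}hC1 -(mulmxA A B' A) mulmxA ctmx_mul hB4 hC4.
  by rewrite -!mulmxA (mulmxA A B A) hB1.
by rewrite -hB2 -mulmxA AB mulmxA BA hC2.
Qed.

Lemma ct_unit r k (H : 'M[C]_(r, k)) : row_free H -> H *m ctmx H \in unitmx.
Proof.
move=> fH; rewrite -row_free_unit; apply: inj_row_free => v Hv.
have w0 : v *m H = 0.
  set w := v *m H.
  have : w *m ctmx w = 0 by rewrite /w ctmx_mul !mulmxA -(mulmxA v) Hv !mul0mx.
  move/matrixP => /(_ 0 0); rewrite /ctmx !mxE => hs.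
  apply/matrixP => i j; rewrite ord1 [RHS]mxE.
  have hj : `|w 0 j| ^+ 2 = 0.
    apply: (@psumr_eq0P _ _ xpredT (fun j => `|w 0 j| ^+ 2)) => //.
      by move=> t _; rewrite exprn_ge0.
    rewrite -[RHS]hs; apply: eq_bigr => t _; rewrite normCK !mxE.
    by [].
  by move/eqP: hj; rewrite sqrf_eq0 normr_eq0 => /eqP.
by apply: (row_free_inj fH); rewrite w0 mul0mx.
Qed.

Lemma herm_inv n (M : 'M[C]_n) : ctmx M = M -> M \in unitmx ->
  ctmx (invmx M) = invmx M.
Proof.
move=> hM uM.
have e : ctmx (invmx M) *m M = 1%:M by rewrite -{2}hM -ctmx_mul mulmxV // ctmx1.
by rewrite -[LHS]mulmx1 -(mulmxV uM) mulmxA e mul1mx.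
Qed.

Lemma cancel_r a b c (X : 'M[C]_(a, b)) (Y : 'M[C]_(b, c)) (Z : 'M[C]_(c, b)) :
  Y *m Z \in unitmx -> X *m Y *m Z *m invmx (Y *m Z) = X.
Proof. by move=> u; rewrite -!mulmxA (mulmxA Y) mulmxV // mulmx1. Qed.

Lemma cancel_l a b c (X : 'M[C]_(a, b)) (Y : 'M[C]_(b, c)) (Z : 'M[C]_(c, b)) :
  Y *m Z \in unitmx -> X *m invmx (Y *m Z) *m Y *m Z = X.
Proof. by move=> u; rewrite -!mulmxA mulVmx // mulmx1. Qed.

Lemma MP_fact m n r (F : 'M[C]_(m, r)) (G : 'M[C]_(r, n)) :
  row_free (ctmx F) -> row_free G -> exists B, is_MP (F *m G) B.
Proof.
move=> fF fG.
have uP : ctmx F *m F \in unitmx by have := @ct_unit _ _ (ctmx F) fF; rewrite ctmxK.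
have uQ : G *m ctmx G \in unitmx by exact: ct_unit.
have hP : ctmx (ctmx F *m F) = ctmx F *m F by rewrite ctmx_mul ctmxK.
have hQ : ctmx (G *m ctmx G) = G *m ctmx G by rewrite ctmx_mul ctmxK.
exists (ctmx G *m invmx (G *m ctmx G) *m invmx (ctmx F *m F) *m ctmx F).
have AB : F *m G *m (ctmx G *m invmx (G *m ctmx G) *m invmx (ctmx F *m F) *m ctmx F)
   = F *m invmx (ctmx F *m F) *m ctmx F by rewrite !mulmxA cancel_r.
have BA : (ctmx G *m invmx (G *m ctmx G) *m invmx (ctmx F *m F) *m ctmx F) *m (F *m G)
   = ctmx G *m invmx (G *m ctmx G) *m G by rewrite !mulmxA cancel_l.
split.
- by rewrite AB !mulmxA cancel_l.
- by rewrite BA !mulmxA cancel_r.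
- by rewrite AB !ctmx_mul ctmxK herm_inv // mulmxA.
- by rewrite BA !ctmx_mul ctmxK herm_inv // mulmxA.
Qed.

Lemma MP_exists m n (A : 'M[C]_(m, n)) : exists B, is_MP A B.
Proof.
have fF : row_free (ctmx (col_base A)).
  by rewrite /row_free /ctmx mxrank_tr mxrank_map; exact: col_base_full.
have := MP_fact fF (row_base_free A); by rewrite mulmx_base.
Qed.

Lemma mpinv_spec m n (A : 'M[C]_(m, n)) : is_MP A (mpinv A).
Proof. rewrite /mpinv; apply: epsilon_spec; exact: MP_exists. Qed.

Lemma transfer m n p q (M : 'M[C]_(m, n)) P (Um : 'M[C]_(m, p)) (Un : 'M[C]_(n, q)) :
  Um *m ctmx Um = 1%:M -> Un *m ctmx Un = 1%:M -> is_MP M P ->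
  is_MP (ctmx Um *m M *m Un) (ctmx Un *m P *m Um).
Proof.
move=> hm hn [h1 h2 h3 h4].
have hm' : forall k (X : 'M[C]_(k, m)), X *m Um *m ctmx Um = X.
  by move=> k X; rewrite -mulmxA hm mulmx1.
have hn' : forall k (X : 'M[C]_(k, n)), X *m Un *m ctmx Un = X.
  by move=> k X; rewrite -mulmxA hn mulmx1.
have h1' : forall k (X : 'M[C]_(k, m)), X *m M *m P *m M = X *m M.
  by move=> k X; rewrite -!mulmxA (mulmxA M P M) h1.
have h2' : forall k (X : 'M[C]_(k, n)), X *m P *m M *m P = X *m P.
  by move=> k X; rewrite -!mulmxA (mulmxA P M P) h2.
have AB : ctmx Um *m M *m Un *m (ctmx Un *m P *m Um) = ctmx Um *m (M *m P) *m Um.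
  by rewrite !mulmxA hn'.
have BA : ctmx Un *m P *m Um *m (ctmx Um *m M *m Un) = ctmx Un *m (P *m M) *m Un.
  by rewrite !mulmxA hm'.
split.
- by rewrite AB !mulmxA hm' h1'.
- by rewrite BA !mulmxA hn' h2'.
- by rewrite AB ctmx_mul ctmx_mul ctmxK h3 !mulmxA.
- by rewrite BA ctmx_mul ctmx_mul ctmxK h4 !mulmxA.
Qed.

End Aux.

Theorem theorem7 (C : numClosedFieldType) (m n : nat) (hm : (0 < m)%N) (hn : (0 < n)%N)
  (X : 'M[C]_(m, n)) (km : 'M[C]_m) (kn : 'M[C]_n)
  (hkm : km \in unitmx) (hkn : kn \in unitmx)
  (hKm : Kmx C m = km *m ctmx km) (hKn : Kmx C n = kn *m ctmx kn) :
  mpinv (ctmx (Jmx C m) *m X *m Jmx C n)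
  = ctmx (Jmx C n) *m ctmx (invmx kn) *m mpinv (ctmx km *m X *m kn)
      *m invmx km *m Jmx C m.
Proof.
have hU : forall p (k : 'M[C]_p), k \in unitmx -> Kmx C p = k *m ctmx k ->
    (invmx k *m Jmx C p) *m ctmx (invmx k *m Jmx C p) = 1%:M.
  move=> p k uk hK; rewrite ctmx_mul !mulmxA -(mulmxA (invmx k)) -/(Kmx C p) hK.
  by rewrite !mulmxA mulVmx // mul1mx -ctmx_mul mulVmx // ctmx1.
have T := transfer (hU _ _ hkm hKm) (hU _ _ hkn hKn) (mpinv_spec (ctmx km *m X *m kn)).
have e1 : ctmx (invmx km *m Jmx C m) *m (ctmx km *m X *m kn) *m (invmx kn *m Jmx C n)
   = ctmx (Jmx C m) *m X *m Jmx C n.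
  rewrite ctmx_mul !mulmxA -(mulmxA _ (ctmx (invmx km))) -ctmx_mul mulmxV // ctmx1 mulmx1.
  by rewrite -(mulmxA _ kn) mulmxV // mulmx1.
rewrite e1 ctmx_mul !mulmxA in T.
apply: MP_uniq (mpinv_spec _) T.
Qed.
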